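(* Let $\sigma>0$, $\lambda>0$, $\kappa_1\in(0,1)$ and $t_1\in(0,\sigma)$. For every $\gamma_1\ge\kappa_1/(\sigma-t_1)$, any solution $(x(t),y(t))$ on $[0,\sigma]$ of the system \[ x'=y,\qquad y'=-\lambda a^+(t)g(x) \] with $x(t_1)\le\kappa_1$ and $y(t_1)\le-\gamma_1$ satisfies $x(\sigma)\le0$ and $y(\sigma)\le-\gamma_1$.
   Context: $a\in L^1(0,\sigma)$ is a real function with positive part $a^+$. $g\colon\mathbb{R}\to[0,+\infty)$ is the extension by zero outside $[0,1]$ of a locally Lipschitz continuous function $g\colon[0,1]\to[0,+\infty)$ with $g(0)=g(1)=0$, $g(s)>0$ for $0<s<1$ and $\lim_{s\to0^+}g(s)/s=0$. Solutions are in the Carathéodory sense. *)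

(* Defs.v *)
From HB Require Import structures.
From mathcomp Require Import all_boot all_order all_algebra.
From mathcomp Require Import all_classical all_reals all_analysis.
Set Implicit Arguments. Unset Strict Implicit. Unset Printing Implicit Defensive.
Import Order.TTheory GRing.Theory Num.Theory.
Import numFieldNormedType.Exports.
Local Open Scope classical_set_scope.
Local Open Scope ring_scope.

Definition pospart (R : realType) (a : R -> R) : R -> R :=
  fun t => Num.max (a t) 0.

(* g : [0,1] -> [0,+oo) locally Lipschitz, extended by zero outside [0,1] *)
Definition locally_lipschitz_on01 (R : realType) (g : R -> R) : Prop :=
  forall s, 0 <= s <= 1 ->
    exists (d L : R), 0 < d /\
      forall u v, 0 <= u <= 1 -> 0 <= v <= 1 ->
        `|u - s| < d -> `|v - s| < d ->
        `|g u - g v| <= L * `|u - v|.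

Definition admissible_g (R : realType) (g : R -> R) : Prop :=
  [/\ (forall s, s < 0 \/ 1 < s -> g s = 0),
      (forall s, 0 <= s <= 1 -> 0 <= g s),
      locally_lipschitz_on01 g,
      g 0 = 0 /\ g 1 = 0 &
      (forall s, 0 < s < 1 -> 0 < g s) /\
      (g s / s @[s --> 0^'+] --> 0)].

(* Caratheodory solution on [0,sigma] of x' = y, y' = - lambda a^+(t) g(x),
   written in the equivalent integral form (x, y absolutely continuous with
   the equations holding a.e.). *)
Definition caratheodory_solution (R : realType) (sigma lambda : R)
    (a g x y : R -> R) : Prop :=
  [/\ (@lebesgue_measure R).-integrable `[0, sigma] (EFin \o y),
      (@lebesgue_measure R).-integrable `[0, sigma]
         (fun s => (lambda * pospart a s * g (x s))%:E) &
      forall t, 0 <= t <= sigma ->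
        x t = x 0 + Rintegral (@lebesgue_measure R) `[0, t] y /\
        y t = y 0 - Rintegral (@lebesgue_measure R) `[0, t]
                       (fun s => lambda * pospart a s * g (x s))].

(* Main.v *)
Require Import Defs.
From HB Require Import structures.
From mathcomp Require Import all_boot all_order all_algebra.
From mathcomp Require Import all_classical all_reals all_analysis.
Import Order.TTheory GRing.Theory Num.Theory.
Import numFieldNormedType.Exports.
Local Open Scope classical_set_scope.
Local Open Scope ring_scope.

Theorem lemma2p1 (R : realType) (sigma lambda kappa1 t1 : R) (a g : R -> R)
  (hsigma : 0 < sigma) (hlambda : 0 < lambda)
  (hkappa : 0 < kappa1 < 1) (ht1 : 0 < t1 < sigma)
  (ha : (@lebesgue_measure R).-integrable `[0, sigma] (EFin \o a))
  (hg : admissible_g g) :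
  forall gamma1 : R, kappa1 / (sigma - t1) <= gamma1 ->
  forall x y : R -> R, caratheodory_solution sigma lambda a g x y ->
  x t1 <= kappa1 -> y t1 <= - gamma1 ->
  x sigma <= 0 /\ y sigma <= - gamma1.
Proof.
move=> gamma1 hgam x y [iy if_ hxy] hx1 hy1.
case: hg => gout gin _ _ _.
have g0 : forall s, 0 <= g s.
  move=> s; have [s0|s0] := ltP s 0; first by rewrite gout //; left.
  have [s1|s1] := lerP s 1; first by apply: gin; rewrite s0 s1.
  by rewrite gout //; right.
set f := fun s => lambda * pospart a s * g (x s).
have f0 : forall s, 0 <= f s.
  move=> s; rewrite /f; apply: mulr_ge0 => //; apply: mulr_ge0; first exact: ltW.
  by rewrite /pospart le_max lexx orbT.
case/andP: ht1 => t10 t1s.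
have t1s' : 0 <= t1 <= sigma by rewrite (ltW t10) (ltW t1s).
have ss : 0 <= sigma <= sigma by rewrite (ltW hsigma) lexx.
have mono : forall t, t1 <= t <= sigma -> y t <= y t1.
  move=> t /andP[t1t ts].
  have tt : 0 <= t <= sigma by rewrite (le_trans (ltW t10) t1t) ts.
  rewrite (hxy t tt).2 (hxy t1 t1s').2 lerD2l lerN2 -subr_ge0.
  rewrite (@Rintegral_itvB _ f (BLeft 0) (BRight t) t1).
  - by apply: Rintegral_ge0 => u _; exact: f0.
  - apply: integrableS if_ => //; apply: subset_itvl; by rewrite bnd_simp.
  - by rewrite bnd_simp ltW.
  - by rewrite bnd_simp.
split; last first.
  by apply: le_trans hy1; apply: mono; rewrite ltW // lexx.
rewrite (hxy sigma ss).1.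
have -> : x 0 = x t1 - Rintegral lebesgue_measure `[0, t1] y.
  by rewrite (hxy t1 t1s').1 addrK.
rewrite -addrA (addrC (- _)) (@Rintegral_itvB _ y (BLeft 0) (BRight sigma) t1) //; last 2 first.
  by rewrite bnd_simp ltW.
  by rewrite bnd_simp ltW.
have icst : (@lebesgue_measure R).-integrable `]t1, sigma] (EFin \o cst (- gamma1)).
  have H : (@lebesgue_measure R).-integrable `[t1, sigma] (EFin \o cst (- gamma1)).
    apply: continuous_compact_integrable; first exact: segment_compact.
    by move=> z; apply: cvg_cst.
  apply: integrableS H => //.
  by apply: subset_itvr; rewrite bnd_simp.
have iy' : (@lebesgue_measure R).-integrable `]t1, sigma] (EFin \o y).
  apply: integrableS iy => //; apply: subset_itvr; by rewrite bnd_simp ltW.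
have le1 := @le_Rintegral _ _ _ lebesgue_measure `]t1, sigma] y (cst (- gamma1)) (measurable_itv _) iy' icst.
have le2 : Rintegral lebesgue_measure `]t1, sigma] y <= - gamma1 * (sigma - t1).
  rewrite (le_trans (le1 _)) //.
    move=> s; rewrite /= in_itv /= => /andP[t1s0 ss0].
    by apply: le_trans hy1; apply: mono; rewrite ltW.
  rewrite Rintegral_cst //.
  have E : fine (lebesgue_measure (`]t1, sigma]%classic : set R)) = sigma - t1.
    rewrite lebesgue_measure_itv /= lte_fin t1s /=.
    by [].
  by rewrite -E; exact: lexx.
apply: (le_trans (lerD hx1 le2)).
have st : 0 < sigma - t1 by rewrite subr_gt0.
rewrite mulNr subr_le0 -ler_pdivrMr //.
Qed.
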